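(* Let $(X,T)$ and $(Y,S)$ be ergodically supported topological dynamical systems with $T$ and $S$ invertible, and suppose $(X,T)$ and $(Y,S)$ are almost topologically conjugate. Then there exist a $T$-invariant set $\tilde X\subseteq X$ and an $S$-invariant set $\tilde Y\subseteq Y$, such that $\tilde X$ has full measure for every ergodically supported measure of $(X,T)$ and $\tilde Y$ has full measure for every ergodically supported measure of $(Y,S)$, and a homeomorphism $\varphi:\tilde X\to\tilde Y$ (subspace topologies) with $\varphi\circ T=S\circ\varphi$ on $\tilde X$; i.e. $\varphi$ is a topological conjugacy between $(\tilde X,T|_{\tilde X})$ and $(\tilde Y,S|_{\tilde Y})$.
   Context: A topological dynamical system $(X,T)$ is a compact metric space $X$ with a continuous surjection $T:X\to X$. A probability measure on $X$ is ergodically supported (for $(X,T)$) if it is $T$-invariant and ergodic and assigns positive measure to every nonempty open subset of $X$; $(X,T)$ is ergodically supported if such a measure exists. A set $E\subseteq X$ is universally null if $\mu(E)=0$ for every ergodically supported measure $\mu$. The inverse limit system of $(X,T)$ is $X^T:=\{(x_i)_{i\in\mathbb Z}\in X^{\mathbb Z}: x_{i+1}=T(x_i)\ \forall i\}$ with the standard compact metric (induced from the product topology) and the shift $\sigma_{X^T}((x_i)_i)=(x_{i+1})_i$. A Markov shift is a closed shift-invariant subset $\Lambda$ of $\mathcal A^{\mathbb Z}$ ($\mathcal A$ finite) given by bi-infinite walks on a finite directed graph, with the shift map $\sigma$. Two ergodically supported systems $(X,T)$, $(Y,S)$ are almost topologically conjugate if there exist an ergodically supported Markov shift $(\Lambda,\sigma)$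 and continuous surjections $f_T:\Lambda\to X^T$, $f_S:\Lambda\to Y^S$ such that (i) $\sigma_{X^T}\circ f_T=f_T\circ\sigma$ and $\sigma_{Y^S}\circ f_S=f_S\circ\sigma$; (ii) there are a $\sigma_{X^T}$-invariant universally null set $M_2\subset X^T$ and a $\sigma_{Y^S}$-invariant universally null set $P_2\subset Y^S$ such that $f_T:\Lambda\setminus M_1\to X^T\setminus M_2$ and $f_S:\Lambda\setminus P_1\to Y^S\setminus P_2$ are one-to-one, where $M_1=f_T^{-1}(M_2)$, $P_1=f_S^{-1}(P_2)$. *)

(* Defs.v *)
From HB Require Import structures.
From mathcomp Require Import all_boot all_order all_algebra.
From mathcomp Require Import all_classical all_reals all_analysis.
Set Implicit Arguments. Unset Strict Implicit. Unset Printing Implicit Defensive.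
Import Order.TTheory GRing.Theory Num.Theory.
Local Open Scope classical_set_scope.
Local Open Scope ring_scope.

Definition borel (T : ptopologicalType) := g_sigma_algebraType (@open T).

Definition pseq (X : ptopologicalType) : Type := {ptws int -> X}.
HB.instance Definition _ (X : ptopologicalType) :=
  Topological.copy (pseq X) {ptws int -> X}.
HB.instance Definition _ (X : ptopologicalType) := Pointed.copy (pseq X) (int -> X).

Definition dalph (A : pointedType) : Type := discrete_topology A.
HB.instance Definition _ (A : pointedType) :=
  Topological.copy (dalph A) (discrete_topology A).
HB.instance Definition _ (A : pointedType) := Pointed.copy (dalph A) A.

Definition shift (V : Type) (x : int -> V) : int -> V := fun i => x (i + 1).

(** Ergodically supported measure of the system (K, F|_K), where K is a
    (closed, F-invariant) subset of the ambient space T: a Borel probability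
    measure on T concentrated on K (i.e. a Borel probability measure on K),
    F-invariant, ergodic, and giving positive mass to every nonempty
    relatively open subset of K. *)
Definition erg_supp_on (R : realType) (T : ptopologicalType) (K : set T)
    (F : T -> T) (mu : probability (borel T) R) : Prop :=
  [/\ mu K = 1%E,
      (forall A : set (borel T), measurable A ->
          mu (F @^-1` A `&` K) = mu (A `&` K)),
      (forall A : set (borel T), measurable A -> A `<=` K ->
          F @^-1` A `&` K = A -> mu A = 0%E \/ mu A = 1%E)
    & (forall U : set T, open U -> U `&` K !=set0 -> (0 < mu (U `&` K))%E)].

Definition erg_supp_measure (R : realType) (T : ptopologicalType) (F : T -> T)
    (mu : probability (borel T) R) : Prop := erg_supp_on setT F mu.

Definition erg_supp_system (R : realType) (T : ptopologicalType) (K : set T)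
    (F : T -> T) : Prop :=
  exists mu : probability (borel T) R, erg_supp_on K F mu.

Definition universally_null (R : realType) (T : ptopologicalType) (K : set T)
    (F : T -> T) (E : set T) : Prop :=
  measurable (E : set (borel T)) /\
  forall mu : probability (borel T) R, erg_supp_on K F mu -> mu E = 0%E.

Definition invariant_in (T : Type) (K : set T) (F : T -> T) (E : set T) : Prop :=
  E `<=` K /\ F @^-1` E `&` K = E.

Definition inv_lim (X : ptopologicalType) (T : X -> X) : set (pseq X) :=
  [set x | forall i : int, x (i + 1) = T (x i)].

Definition markov_shift (A : pointedType) (G : A -> A -> bool) :
    set (pseq (dalph A)) :=
  [set x | forall i : int, G (x i) (x (i + 1))].

(** Topological dynamical system: compact metric space, continuous surjection.
    (A pseudometric Hausdorff space is a metric space.) *)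
Definition tds (R : realType) (X : pseudoPMetricType R) (T : X -> X) : Prop :=
  [/\ hausdorff_space X, compact [set: X], continuous T & forall y, exists x, T x = y].

Definition almost_conj_map (R : realType) (A : pointedType)
    (Lam : set (pseq (dalph A)))
    (X : ptopologicalType) (T : X -> X)
    (f : pseq (dalph A) -> pseq X) : Prop :=
  [/\ {within Lam, continuous f},
      f @` Lam = inv_lim T,
      (forall x, Lam x -> f (shift x) = shift (f x))
    & exists M2 : set (pseq X),
        [/\ invariant_in (inv_lim T) (@shift X) M2,
            universally_null R (inv_lim T) (@shift X) M2
          & set_inj (Lam `\` (f @^-1` M2)) f]].

Definition almost_top_conj (R : realType) (X Y : ptopologicalType)
    (T : X -> X) (S : Y -> Y) : Prop :=
  exists (A : pointedType) (G : A -> A -> bool),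
    finite_set [set: A] /\
    let Lam := markov_shift G in
    erg_supp_system R Lam (@shift (dalph A)) /\
    exists (fT : pseq (dalph A) -> pseq X)
           (fS : pseq (dalph A) -> pseq Y),
      almost_conj_map R Lam T fT /\ almost_conj_map R Lam S fS.

(* Main.v *)
Require Import Defs.
Set Warnings "-all".
From HB Require Import structures.
From mathcomp Require Import all_boot all_order all_algebra.
From mathcomp Require Import all_classical all_reals all_analysis.
Import Order.TTheory GRing.Theory Num.Theory.
Local Open Scope classical_set_scope.
Local Open Scope ring_scope.
Set Implicit Arguments. Unset Strict Implicit. Unset Printing Implicit Defensive.
Section Top.
Context {U V : topologicalType}.

Lemma within_openP (D : set U) (f : U -> V) :
  {within D, continuous f} <->
  (forall W, open W -> exists2 Q, open Q & f @^-1` W `&` D = Q `&` D).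
Proof.
rewrite continuousP; split => H W oW.
  have hh := H W oW.
  have [Q1 oQ e] := (iffLR (@open_subspaceP U D (f @^-1` W)) hh).
  by exists Q1.
apply/(@open_subspaceP U D (f @^-1` W)).
have [Q1 oQ e] := H W oW; by exists Q1.
Qed.

Lemma within_closedP (D : set U) (f : U -> V) :
  {within D, continuous f} <->
  (forall W, closed W -> exists2 Q, closed Q & f @^-1` W `&` D = Q `&` D).
Proof.
rewrite continuous_closedP; split => H W oW.
  have hh := H W oW.
  have [Q1 oQ e] := (iffLR (@closed_subspaceP U D (f @^-1` W)) hh).
  by exists Q1.
apply/(@closed_subspaceP U D (f @^-1` W)).
have [Q1 oQ e] := H W oW; by exists Q1.
Qed.
End Top.

Lemma within_comp {U V W : topologicalType} (A : set U) (B : set V)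
  (f : U -> V) (g : V -> W) :
  {within A, continuous f} -> (forall x, A x -> B (f x)) ->
  {within B, continuous g} -> {within A, continuous (g \o f)}.
Proof.
move=> /within_openP cf fAB /within_openP cg; apply/within_openP => Z oZ.
have [Q oQ eQ] := cg Z oZ.
have [Q' oQ' eQ'] := cf Q oQ.
exists Q' => //; rewrite -eQ'; apply/seteqP; split => x [] /= h Ax; split => //.
  have : (g @^-1` Z `&` B) (f x) by split => //; exact: fAB.
  by rewrite eQ => -[].
have : (Q `&` B) (f x) by split => //; exact: fAB.
by rewrite -eQ => -[].
Qed.

Lemma inverse_within_continuous {U V : topologicalType} (A : set U) (D : set V)
  (f : U -> V) (g : V -> U) :
  hausdorff_space V -> compact A -> closed A -> {within A, continuous f} ->
  (forall y, D y -> A (g y) /\ f (g y) = y) ->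
  (forall a, A a -> D (f a) -> g (f a) = a) ->
  {within D, continuous g}.
Proof.
move=> hV cA clA cf H1 H2; apply/within_closedP => C cC.
exists (f @` (C `&` A)).
  apply: compact_closed => //; apply: continuous_compact.
    by apply: continuous_subspaceW cf => x [].
  apply: (subclosed_compact _ cA); [exact: closedI | by move=> x []].
apply/seteqP; split => y [].
  move=> Cgy Dy; split => //; exists (g y); first by split => //; case: (H1 y Dy).
  by case: (H1 y Dy).
by move=> [a [Ca Aa] <-] Dfa; split => //=; rewrite H2.
Qed.
Section Borel.
Context {U V : ptopologicalType}.

Lemma open_meas (W : set U) : open W -> measurable (W : set (borel U)).
Proof. by move=> oW; apply: sub_sigma_algebra. Qed.

Lemma closed_meas (W : set U) : closed W -> measurable (W : set (borel U)).
Proof.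
move=> cW; rewrite -[W]setCK; apply: measurableC; apply: open_meas.
exact: closed_openC.
Qed.

Lemma cont_meas (f : U -> V) : continuous f ->
  measurable_fun [set: borel U] (f : borel U -> borel V).
Proof.
move=> cf; apply: (@measurability _ _ (borel U) (borel V) setT _ (@open V)) => //.
move=> _ [W oW <-]; rewrite setTI; apply: open_meas.
by move/continuousP: cf; apply.
Qed.

Definition patch (D : set U) (f : U -> V) (x : U) : V :=
  if pselect (D x) then f x else point.

Lemma patch_in (D : set U) f x : D x -> patch D f x = f x.
Proof. by rewrite /patch; case: pselect. Qed.

Lemma patch_meas (D : set U) (f : U -> V) :
  measurable (D : set (borel U)) -> {within D, continuous f} ->
  measurable_fun [set: borel U] (patch D f : borel U -> borel V).
Proof.
move=> mD /within_openP cf.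
apply: (@measurability _ _ (borel U) (borel V) setT _ (@open V)) => //.
move=> _ [W oW <-]; rewrite setTI.
have [Q oQ eQ] := cf W oW.
have -> : patch D f @^-1` W = (Q `&` D) `|` (~` D `&` [set _ | W point]).
  apply/seteqP; split => x; rewrite /patch /=; case: pselect => Dx.
  - by move=> Wx; left; have : (f @^-1` W `&` D) x by []; rewrite eQ.
  - by move=> Wp; right.
  - case=> -[] //; move=> Qx _; have : (Q `&` D) x by [].
    by rewrite -eQ => -[].
  - by case=> -[].
apply: measurableU; first by apply: measurableI => //; exact: open_meas.
apply: measurableI; first exact: measurableC.
by case: (pselect (W point)) => h; [rewrite (_ : [set _ | _] = setT) //; apply/seteqP; split|
  rewrite (_ : [set _ | _] = set0) //; apply/seteqP; split].
Qed.

End Borel.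

Lemma pushP (R : realType) {U V : ptopologicalType}
  (mu : probability (borel U) R) (f : U -> V) :
  measurable_fun [set: borel U] (f : borel U -> borel V) ->
  exists nu : probability (borel V) R, forall B, nu B = mu (f @^-1` B).
Proof.
move=> mf.
have fP : (f : borel U -> borel V) \in mfun by rewrite inE.
by exists (distribution mu (mfun_Sub fP)).
Qed.

Lemma prob_restr (R : realType) {U : ptopologicalType}
  (mu : probability (borel U) R) (D A : set (borel U)) :
  measurable D -> mu D = 1%E -> measurable A -> mu A = mu (A `&` D).
Proof.
move=> mD muD mA.
have c : mu (~` D) = 0%E by rewrite probability_setC // muD subee.
rewrite -{1}(setIT A) -(setUv D) setIUr measureU //; last 3 first.
- exact: measurableI.
- by apply: measurableI => //; exact: measurableC.
- by rewrite setIACA setICr !setI0.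
have : (mu (A `&` ~` D) <= 0)%E.
  rewrite -c; apply: le_measure; last by move=> x [].
    by rewrite inE; apply: measurableI => //; exact: measurableC.
  by rewrite inE; exact: measurableC.
by rewrite measure_le0 => /eqP ->; rewrite adde0.
Qed.
Lemma GP (R : realType) {U V : ptopologicalType} (Lam Lam' : set U) (K : set V)
  (f : U -> V) (F : U -> U) (Gm : V -> V) (kappa : probability (borel U) R) :
  measurable (Lam : set (borel U)) -> measurable (Lam' : set (borel U)) ->
  measurable (K : set (borel V)) ->
  measurable_fun [set: borel V] (Gm : borel V -> borel V) ->
  kappa Lam' = 1%E -> Lam' `<=` Lam ->
  {within Lam', continuous f} ->
  (forall x, Lam' x -> [/\ K (f x), Lam' (F x) & f (F x) = Gm (f x)]) ->
  (forall x, Lam x -> Lam' (F x) -> Lam' x) ->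
  (forall W, open W -> W `&` K !=set0 -> exists x, Lam' x /\ W (f x)) ->
  erg_supp_on Lam F kappa ->
  exists rho : probability (borel V) R, erg_supp_on K Gm rho /\
   forall B, measurable (B : set (borel V)) ->
     measurable (Lam' `&` f @^-1` B : set (borel U)) /\
     rho B = kappa (Lam' `&` f @^-1` B).
Proof.
move=> mL mL' mK mGm k1 L'L cf H1 H3 H2 [kL kinv kerg kpos].
have mh := patch_meas mL' cf.
have [rho rhoE] := pushP kappa mh.
have key B : measurable (B : set (borel V)) ->
     measurable (Lam' `&` f @^-1` B : set (borel U)) /\
     rho B = kappa (Lam' `&` f @^-1` B).
  move=> mB.
  have mhB : measurable (patch Lam' f @^-1` B : set (borel U)).
    by rewrite -[_ @^-1` _]setTI; exact: mh.
  have eB : patch Lam' f @^-1` B `&` Lam' = Lam' `&` f @^-1` B.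
    apply/seteqP; split => x [].
      by move=> + Lx; rewrite /preimage /= patch_in.
    by move=> Lx; split => //; rewrite /preimage /= patch_in.
  split; first by rewrite -eB; exact: measurableI.
  by rewrite rhoE (prob_restr mL' k1 mhB) eB.
have E1 B : Lam' `&` f @^-1` (Gm @^-1` B `&` K) = F @^-1` (Lam' `&` f @^-1` B) `&` Lam.
  apply/seteqP; split => x.
    move=> [Lx [GB Kx]]; have [_ LF efF] := H1 x Lx.
    split; last exact: L'L.
    by split => //; rewrite /preimage /= efF.
  move=> [[LFx fFB] Lx]; have L'x := H3 x Lx LFx.
  have [Kfx _ efF] := H1 x L'x.
  by split => //; split => //; rewrite /preimage /= -efF.
have E2 B : Lam' `&` f @^-1` (B `&` K) = Lam' `&` f @^-1` B.
  apply/seteqP; split => x [Lx]; first by case.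
  by move=> fB; split => //; split => //; case: (H1 x Lx).
have E3 C : C `<=` Lam' -> C `&` Lam = C.
  by move=> CL; apply/seteqP; split => [x []//|x Cx]; split => //; apply/L'L/CL.
exists rho; split; last exact: key.
split.
- have [_ ->] := key K mK.
  by rewrite (_ : _ `&` _ = Lam') //; apply/seteqP; split => [x []//|x Lx];
    split => //; case: (H1 x Lx).
- move=> B mB.
  have mGB : measurable (Gm @^-1` B `&` K : set (borel V)).
    by apply: measurableI => //; rewrite -[_ @^-1` _]setTI; exact: mGm.
  have [_ ->] := key _ mGB; have [_ ->] := key _ (measurableI _ _ mB mK).
  have [mC _] := key _ mB.
  by rewrite E1 kinv // E2 E3 // => x [].
- move=> B mB BK eB.
  have [mC ->] := key _ mB.
  apply: kerg => //; first by move=> x [/L'L].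
  by rewrite -E1 eB.
- move=> W oW WK.
  have [x [L'x Wfx]] := H2 W oW WK.
  have [_ ->] := key _ (measurableI _ _ (open_meas oW) mK).
  rewrite E2.
  have /within_openP := cf; move=> /(_ W oW) [Q oQ eQ].
  rewrite setIC eQ.
  have mQL : measurable (Q `&` Lam : set (borel U)).
    by apply: measurableI => //; exact: open_meas.
  rewrite [X in (0 < X)%E](_ : _ = kappa (Q `&` Lam)); last first.
    by rewrite (prob_restr mL' k1 mQL) -setIA [Lam `&` _]setIC E3.
  apply: kpos => //; exists x; split; last exact: L'L.
  have : (f @^-1` W `&` Lam') x by [].
  by rewrite eQ => -[].
Qed.
Lemma ptws_continuous {W : topologicalType} {X : ptopologicalType} (g : W -> pseq X) :
  (forall i, continuous (fun w => g w i)) -> continuous g.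
Proof.
move=> h w; apply/cvg_sup => i.
move=> A /=; rewrite nbhsE => -[B [oB Bgw] BA].
case: oB => C oC eC.
have : nbhs (g w i) C by apply: open_nbhs_nbhs; split => //; rewrite -eC in Bgw.
move=> /(h i w) /=; rewrite nbhsE => -[D [oD Dw] DC].
exists D; first by split.
move=> x Dx; apply: BA; rewrite -eC; exact: DC.
Qed.

Lemma shift_continuous {X : ptopologicalType} : continuous (@Defs.shift X : pseq X -> pseq X).
Proof.
apply: ptws_continuous => i x; exact: (@proj_continuous int (fun=> X) (i + 1) x).
Qed.
From mathcomp Require Import zify.
Lemma negz0_add1 : Negz 0 + 1 = 0 :> int. Proof. by []. Qed.
Lemma negzS_add1 n : Negz n.+1 + 1 = Negz n :> int.
Proof. rewrite !NegzE; lia. Qed.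
Lemma posz_add1 (n : nat) : n%:Z + 1 = n.+1%:Z.
Proof. lia. Qed.
Section Markov.
Context (A : pointedType) (G : A -> A -> bool).

Lemma dalph_open (B : set (dalph A)) : open B.
Proof. exact: (@discrete_open (discrete_topology A) B). Qed.

Lemma proj_open_pre (X : ptopologicalType) (i : int) (B : set X) :
  open B -> open [set w : pseq X | B (w i)].
Proof.
move=> oB.
have pc : continuous (fun w : pseq X => w i) :=
  fun x => @proj_continuous int (fun=> X) i x.
exact: ((continuousP _).1 pc B oB).
Qed.

Lemma markov_closed : closed (markov_shift G).
Proof.
move=> z cz i.
pose N := [set w : pseq (dalph A) | w i = z i /\ w (i + 1) = z (i + 1)].
have oN : open N.
  have -> : N = [set w : pseq (dalph A) | [set z i] (w i)] `&`
     [set w : pseq (dalph A) | [set z (i + 1)] (w (i + 1))] by [].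
  by apply: openI; apply: proj_open_pre; apply: dalph_open.
have [w [Lw [e1 e2]]] : markov_shift G `&` N !=set0.
  by apply: cz; apply: open_nbhs_nbhs; split.
by have := Lw i; rewrite e1 e2.
Qed.

Lemma markov_compact : finite_set [set: A] -> compact (markov_shift G).
Proof.
move=> finA.
apply: (@subclosed_compact _ (markov_shift G) setT markov_closed) => //.
have := @tychonoff int (fun=> dalph A) (fun=> setT) (fun=> @finite_compact (dalph A) setT finA).
by move=> h; apply: (subclosed_compact _ h).
Qed.

Lemma markov_shift_in z : markov_shift G z -> markov_shift G (Defs.shift z).
Proof. by move=> Lz i; apply: Lz. Qed.

End Markov.
Definition ext {X : Type} (T Ti : X -> X) (x : X) : int -> X :=
  fun i => match i with Posz n => iter n T x | Negz n => iter n.+1 Ti x end.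

Section Ext.
Context {X : Type} (T Ti : X -> X) (TK : cancel T Ti) (TiK : cancel Ti T).

Lemma ext_step x i : ext T Ti x (i + 1) = T (ext T Ti x i).
Proof.
case: i => [n|[|n]].
- by rewrite posz_add1.
- by rewrite negz0_add1 /= TiK.
- by rewrite negzS_add1 /= TiK.
Qed.

Lemma ext0 x : ext T Ti x 0 = x. Proof. by []. Qed.

Lemma invlim_uniq (z w : int -> X) : (forall i, z (i + 1) = T (z i)) ->
  (forall i, w (i + 1) = T (w i)) -> z 0 = w 0 -> z = w.
Proof.
move=> hz hw e0; apply: funext => -[n|n].
- elim: n => [//|n IH]; by rewrite -posz_add1 hz hw IH.
- elim: n => [|n IH]; apply: (can_inj TK).
    by rewrite -hz -hw negz0_add1.
  by rewrite -hz -hw negzS_add1.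
Qed.

Lemma ext_uniq (z : int -> X) : (forall i, z (i + 1) = T (z i)) -> ext T Ti (z 0) = z.
Proof. by move=> hz; apply: invlim_uniq => //; exact: ext_step. Qed.

Lemma ext_T x : ext T Ti (T x) = Defs.shift (ext T Ti x).
Proof.
apply: invlim_uniq.
- exact: ext_step.
- by move=> i; rewrite /Defs.shift ext_step.
- by rewrite /Defs.shift ext_step.
Qed.
End Ext.
Definition lift {A : pointedType} {X : ptopologicalType} (Lam : set (pseq (dalph A)))
  (f : pseq (dalph A) -> pseq X) (M2 : set (pseq X)) (z : pseq X) : pseq (dalph A) :=
  xget point [set l | Lam l /\ ~ M2 (f l) /\ f l = z].

Section Side.
Context (R : realType) (A : pointedType) (G : A -> A -> bool).
Hypothesis finA : finite_set [set: A].
Context (X : ptopologicalType) (T Ti : X -> X).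
Hypotheses (TK : cancel T Ti) (TiK : cancel Ti T) (hX : hausdorff_space X).
Context (f : pseq (dalph A) -> pseq X) (M2 : set (pseq X)).
Hypotheses (fc : {within markov_shift G, continuous f})
  (fim : f @` markov_shift G = inv_lim T)
  (fsh : forall x, markov_shift G x -> f (Defs.shift x) = Defs.shift (f x))
  (M2inv : invariant_in (inv_lim T) (@Defs.shift X) M2)
  (M2null : universally_null R (inv_lim T) (@Defs.shift X) M2)
  (finj : set_inj (markov_shift G `\` (f @^-1` M2)) f).

Local Notation Lam := (markov_shift G).
Local Notation e := (ext T Ti).
Local Notation g := (lift Lam f M2).

Lemma hpseq : hausdorff_space (pseq X).
Proof. exact: (@hausdorff_product int (fun=> X)). Qed.

Lemma K_compact : compact (inv_lim T).
Proof. by rewrite -fim; apply: continuous_compact fc (markov_compact finA). Qed.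

Lemma K_closed : closed (inv_lim T).
Proof. exact: compact_closed hpseq K_compact. Qed.

Lemma K_meas : measurable (inv_lim T : set (borel (pseq X))).
Proof. exact: closed_meas K_closed. Qed.

Lemma e_in x : inv_lim T (e x).
Proof. by move=> i; rewrite ext_step. Qed.

Lemma e_uniq z : inv_lim T z -> e (z 0) = z.
Proof. by move=> hz; apply: ext_uniq. Qed.

Lemma e_cont : continuous (e : X -> pseq X).
Proof.
apply/continuous_subspace_setT.
have pc : continuous (fun w : pseq X => w 0) :=
  fun x => @proj_continuous int (fun=> X) 0 x.
apply: (@inverse_within_continuous (pseq X) X (inv_lim T) setT (fun w => w 0)) => //.
- exact: K_compact.
- exact: K_closed.
- exact: continuous_subspaceT.
- by move=> y _; split; [exact: e_in|].
- by move=> a Ka _; exact: e_uniq.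
Qed.

Lemma M2_shift z : inv_lim T z -> (M2 (Defs.shift z) <-> M2 z).
Proof.
move=> Kz; case: M2inv => M2K eM; split.
  move=> h; have : (@Defs.shift X @^-1` M2 `&` inv_lim T) z by split.
  by rewrite eM.
move=> h; have : (@Defs.shift X @^-1` M2 `&` inv_lim T) z by rewrite eM.
by case.
Qed.

Lemma g_spec z : inv_lim T z -> ~ M2 z -> [/\ Lam (g z), ~ M2 (f (g z)) & f (g z) = z].
Proof.
move=> Kz nM; rewrite /lift.
have : exists l, [set l | Lam l /\ ~ M2 (f l) /\ f l = z] l.
  move: Kz; rewrite -fim => -[l Ll fl]; exists l; split => //; split => //; by rewrite fl.
by move=> /(xgetPex point) [? [? ?]]; split.
Qed.

Lemma g_f l : Lam l -> ~ M2 (f l) -> g (f l) = l.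
Proof.
move=> Ll nM.
have Kf : inv_lim T (f l) by rewrite -fim; exists l.
have [Lg nMg fg] := g_spec Kf nM.
by apply: finj => //; rewrite inE; split.
Qed.

Lemma g_cont : {within inv_lim T `\` M2, continuous g}.
Proof.
apply: (@inverse_within_continuous _ _ Lam _ f) => //.
- exact: hpseq.
- exact: markov_compact.
- exact: markov_closed.
- by move=> y [Ky nM]; have [] := g_spec Ky nM.
- by move=> l Ll [_ nM]; exact: g_f.
Qed.

Definition DX := [set x | ~ M2 (e x)].

Lemma ge_cont : {within DX, continuous (g \o e)}.
Proof.
apply: (within_comp (B := inv_lim T `\` M2)).
- by apply: continuous_subspaceT; exact: e_cont.
- by move=> x nM; split => //; exact: e_in.
- exact: g_cont.
Qed.

Lemma DX_T x : DX (T x) <-> DX x.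
Proof.
rewrite /DX /= (ext_T TK TiK).
by split => h1 h2; apply: h1; [rewrite M2_shift // ; exact: e_in | rewrite -M2_shift //; exact: e_in].
Qed.

Lemma g_shift x : DX x -> g (e (T x)) = Defs.shift (g (e x)).
Proof.
move=> Dx; have [Ll nM fl] := g_spec (e_in x) Dx.
move: Ll nM fl; set l := g (e x) => Ll nM fl.
rewrite (ext_T TK TiK) -fl -fsh //.
apply: g_f; first exact: markov_shift_in.
rewrite fsh // M2_shift //; rewrite fl; exact: e_in.
Qed.

Lemma DX_meas : measurable (DX : set (borel X)).
Proof.
have -> : DX = ~` (e @^-1` M2) by [].
apply: measurableC; rewrite -[_ @^-1` _]setTI.
by apply: (cont_meas e_cont) => //; case: M2null.
Qed.

Lemma PE (mu : probability (borel X) R) : erg_supp_measure T mu -> mu DX = 1%E.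
Proof.
move=> emu.
have H2 : forall W, open W -> W `&` inv_lim T !=set0 -> exists x, setT x /\ W (e x).
  by move=> W oW [z [Wz Kz]]; exists (z 0); rewrite e_uniq.
have [rho [erho key]] := @GP R X (pseq X) setT setT (inv_lim T) e T (@Defs.shift X) mu
   measurableT measurableT K_meas (cont_meas shift_continuous) (probability_setT _)
   (fun x h => h) (continuous_subspaceT e_cont)
   (fun x _ => And3 (e_in x) I (ext_T TK TiK x)) (fun x _ _ => I) H2 emu.
case: M2null => mM2 nM2.
have [_ h] := key _ mM2.
have -> : DX = ~` (e @^-1` M2) by [].
rewrite probability_setC; last first.
  rewrite -[_ @^-1` _]setTI.
  by apply: (cont_meas e_cont) => //.
by rewrite setTI in h; rewrite -h nM2 // sube0.
Qed.


Lemma Lam_meas : measurable (Lam : set (borel (pseq (dalph A)))).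
Proof. by apply: closed_meas; apply: markov_closed. Qed.

Lemma PF_null (kappa : probability (borel (pseq (dalph A))) R) :
  erg_supp_on Lam (@Defs.shift (dalph A)) kappa ->
  measurable (Lam `&` f @^-1` M2 : set (borel (pseq (dalph A)))) /\
  kappa (Lam `&` f @^-1` M2) = 0%E.
Proof.
move=> ek; have kL : kappa Lam = 1%E by case: ek.
have H1 : forall x, Lam x -> [/\ inv_lim T (f x), Lam (Defs.shift x) & f (Defs.shift x) = Defs.shift (f x)].
  move=> x Lx; split; [by rewrite -fim; exists x | exact: markov_shift_in | exact: fsh].
have H2 : forall W, open W -> W `&` inv_lim T !=set0 -> exists x, Lam x /\ W (f x).
  by move=> W oW [z [Wz]]; rewrite -fim => -[l Ll fl]; exists l; rewrite fl.
have [rho [erho key]] := @GP R (pseq (dalph A)) (pseq X) Lam Lam (inv_lim T) f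
   (@Defs.shift (dalph A)) (@Defs.shift X) kappa
   Lam_meas Lam_meas K_meas (cont_meas shift_continuous) kL
   (fun x h => h) fc H1 (fun x h _ => h) H2 ek.
case: M2null => mM2 nM2.
have [mS h] := key _ mM2.
by split => //; rewrite -h nM2.
Qed.

Lemma nu_exists (kappa0 : probability (borel (pseq (dalph A))) R)
  (mu : probability (borel X) R) :
  erg_supp_on Lam (@Defs.shift (dalph A)) kappa0 -> erg_supp_measure T mu ->
  exists nu : probability (borel (pseq (dalph A))) R,
    erg_supp_on Lam (@Defs.shift (dalph A)) nu /\
    forall B, measurable (B : set (borel (pseq (dalph A)))) ->
      measurable (DX `&` (g \o e) @^-1` B : set (borel X)) /\
      nu B = mu (DX `&` (g \o e) @^-1` B).
Proof.
move=> ek0 emu.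
have H1 : forall x, DX x -> [/\ Lam ((g \o e) x), DX (T x) & (g \o e) (T x) = Defs.shift ((g \o e) x)].
  move=> x Dx; split.
  - by have [] := g_spec (e_in x) Dx.
  - by apply/DX_T.
  - exact: g_shift.
have H2 : forall W, open W -> W `&` Lam !=set0 -> exists x, DX x /\ W ((g \o e) x).
  move=> W oW WL.
  have [[l [Wl [Ll nMl]]]|nex] := pselect (exists l, W l /\ Lam l /\ ~ M2 (f l)).
    have Kf : inv_lim T (f l) by rewrite -fim; exists l.
    exists (f l 0); rewrite /DX /= e_uniq //; split => //.
    by rewrite g_f.
  exfalso.
  have [mN nN] := PF_null ek0.
  have : (0 < kappa0 (W `&` Lam))%E by case: ek0 => _ _ _; apply.
  have : (kappa0 (W `&` Lam) <= kappa0 (Lam `&` f @^-1` M2))%E.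
    apply: le_measure; rewrite ?inE //.
      by apply: measurableI; [exact: open_meas | exact: Lam_meas].
    move=> l [Wl Ll]; split => //; apply: contrapT => nM.
    by apply: nex; exists l.
  by rewrite nN => /le_gtF ->.
exact: (@GP R X (pseq (dalph A)) setT DX Lam (g \o e) T (@Defs.shift (dalph A)) mu
   measurableT DX_meas Lam_meas (cont_meas shift_continuous) (PE emu)
   (fun x _ => I) ge_cont H1 (fun x _ h => proj1 (DX_T x) h) H2 emu).
Qed.


Lemma side_pack :
  [/\ (forall x, DX (T x) <-> DX x),
      (forall x, DX x -> [/\ Lam (g (e x)), ~ M2 (f (g (e x))), f (g (e x)) = e x
                           & g (e (T x)) = Defs.shift (g (e x))]),
      (forall l, Lam l -> ~ M2 (f l) -> g (f l) = l),
      (forall l, Lam l -> [/\ inv_lim T (f l), f (Defs.shift l) = Defs.shift (f l)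
                            & Lam (Defs.shift l)]) &
      (forall z, inv_lim T z -> (M2 (Defs.shift z) <-> M2 z))] /\
  [/\ (forall z, inv_lim T z -> e (z 0) = z),
      {within DX, continuous (g \o e)} /\ {within Lam, continuous f},
      (forall x, inv_lim T (e x) /\ e x 0 = x),
      measurable (DX : set (borel X)) &
      (forall mu : probability (borel X) R, erg_supp_measure T mu -> mu DX = 1%E)] /\
  ((measurable (Lam `&` f @^-1` M2 : set (borel (pseq (dalph A)))) /\
        forall kappa : probability (borel (pseq (dalph A))) R,
          erg_supp_on Lam (@Defs.shift (dalph A)) kappa ->
          kappa (Lam `&` f @^-1` M2) = 0%E) /\
       (forall (kappa0 : probability (borel (pseq (dalph A))) R)
          (mu : probability (borel X) R),
          erg_supp_on Lam (@Defs.shift (dalph A)) kappa0 -> erg_supp_measure T mu ->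
          exists nu : probability (borel (pseq (dalph A))) R,
            erg_supp_on Lam (@Defs.shift (dalph A)) nu /\
            forall B, measurable (B : set (borel (pseq (dalph A)))) ->
              measurable (DX `&` (g \o e) @^-1` B : set (borel X)) /\
              nu B = mu (DX `&` (g \o e) @^-1` B))).
Proof using finA TK TiK hX fc fim fsh M2inv M2null finj.
split; [split|split; [split|split]].
- exact: DX_T.
- move=> x Dx; have [? ? ?] := g_spec (e_in x) Dx; split => //; exact: g_shift.
- exact: g_f.
- move=> l Ll; split; [by rewrite -fim; exists l | exact: fsh | exact: markov_shift_in].
- exact: M2_shift.
- exact: e_uniq.
- split; [exact: ge_cont | exact: fc].
- by move=> x; split; [exact: e_in|].
- exact: DX_meas.
- exact: PE.
- split; last by move=> kappa ek; case: (PF_null ek).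
  have mh := patch_meas Lam_meas fc.
  have mP : measurable (patch Lam f @^-1` M2 : set (borel (pseq (dalph A)))).
    by rewrite -[_ @^-1` _]setTI; apply: mh => //; case: M2null.
  have -> : Lam `&` f @^-1` M2 = Lam `&` patch Lam f @^-1` M2.
    by apply/seteqP; split => x [Lx h]; split => //; move: h; rewrite /preimage /= patch_in.
  exact: measurableI Lam_meas mP.
- move=> kappa0 mu ek0 emu; exact: nu_exists ek0 emu.
Qed.

End Side.
Lemma meas_part (R : realType) (X : ptopologicalType) (D N : set X)
  (mu : probability (borel X) R) :
  measurable (D : set (borel X)) -> measurable (N : set (borel X)) ->
  mu D = 1%E -> mu N = 0%E -> mu (D `&` ~` N) = 1%E.
Proof.
move=> mD mN mu1 mu0.
have mC : measurable (~` N : set (borel X)) by exact: measurableC.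
by rewrite setIC -(prob_restr mD mu1 mC) probability_setC // mu0 sube0.
Qed.
Unset Implicit Arguments.
Theorem theorem3p2 (R : realType) (X Y : pseudoPMetricType R)
    (T : X -> X) (S : Y -> Y) :
  tds T -> tds S -> bijective T -> bijective S ->
  erg_supp_system R setT T -> erg_supp_system R setT S ->
  almost_top_conj R T S ->
  exists (Xt : set X) (Yt : set Y) (phi : X -> Y) (phi_inv : Y -> X),
    [/\ T @^-1` Xt = Xt /\ S @^-1` Yt = Yt,
        (measurable (Xt : set (borel X)) /\
          (forall mu : probability (borel X) R,
              erg_supp_measure T mu -> mu Xt = 1%E)),
        (measurable (Yt : set (borel Y)) /\
          (forall mu : probability (borel Y) R,
              erg_supp_measure S mu -> mu Yt = 1%E)),
        [/\ {within Xt, continuous phi}, {within Yt, continuous phi_inv},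
            (forall x, Xt x -> Yt (phi x) /\ phi_inv (phi x) = x)
          & (forall y, Yt y -> Xt (phi_inv y) /\ phi (phi_inv y) = y)]
      & forall x, Xt x -> phi (T x) = S (phi x)].
Proof.
move=> [hX _ _ _] [hY _ _ _] [Ti TK TiK] [Si SK SiK] [mu0 emu0] [mv0 emv0].
move=> [A [G [finA H]]]; move: H => /= [[k0 ek0] [fT [fS [hT hS]]]].
case: hT => fTc fTim fTsh [M2 [M2inv M2null fTinj]].
case: hS => fSc fSim fSsh [P2 [P2inv P2null fSinj]].
have [[XDT XP XgF XL XM] [[XeU [Xgc Xfc] Xe XDm XD1] [[XNm XN0] Xnu]]] :=
  side_pack finA TK TiK hX fTc fTim fTsh M2inv M2null fTinj.
have [[YDT YP YgF YL YM] [[YeU [Ygc Yfc] Ye YDm YD1] [[YNm YN0] Ynu]]] :=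
  side_pack finA SK SiK hY fSc fSim fSsh P2inv P2null fSinj.
set Lam := markov_shift G in XP XgF XL Xgc Xfc XNm XN0 Xnu YP YgF YL Ygc Yfc YNm YN0 Ynu ek0.
set eT := ext T Ti in XP XeU Xgc Xe Xnu.
set eS := ext S Si in YP YeU Ygc Ye Ynu.
set gT := lift Lam fT M2 in XP XgF Xgc Xnu.
set gS := lift Lam fS P2 in YP YgF Ygc Ynu.
set DT := DX T Ti M2 in XDT XP Xgc XDm XD1 Xnu.
set DS := DX S Si P2 in YDT YP Ygc YDm YD1 Ynu.
pose Xt := [set x | DT x /\ ~ P2 (fS (gT (eT x)))].
pose Yt := [set y | DS y /\ ~ M2 (fT (gS (eS y)))].
pose NX := DT `&` (gT \o eT) @^-1` (Lam `&` fS @^-1` P2).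
pose NY := DS `&` (gS \o eS) @^-1` (Lam `&` fT @^-1` M2).
have XtE : Xt = DT `&` ~` NX.
  apply/seteqP; split => x [Dx h]; split => //.
    by move=> [_ [_ P]].
  move=> P; apply: h; split => //; split => //; by case: (XP x Dx).
have YtE : Yt = DS `&` ~` NY.
  apply/seteqP; split => x [Dx h]; split => //.
    by move=> [_ [_ P]].
  move=> P; apply: h; split => //; split => //; by case: (YP x Dx).
have mNX : measurable (NX : set (borel X)).
  by have [? [_ /(_ _ YNm) []]] := Xnu k0 mu0 ek0 emu0.
have mNY : measurable (NY : set (borel Y)).
  by have [? [_ /(_ _ XNm) []]] := Ynu k0 mv0 ek0 emv0.
have mXt : measurable (Xt : set (borel X)).
  by rewrite XtE; apply: measurableI => //; exact: measurableC.
have mYt : measurable (Yt : set (borel Y)).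
  by rewrite YtE; apply: measurableI => //; exact: measurableC.
have XT x : DT x -> fS (gT (eT (T x))) = Defs.shift (fS (gT (eT x))).
  move=> Dx; have [Ll _ _ ->] := XP x Dx.
  by have [_ -> _] := YL _ Ll.
have YT y : DS y -> fT (gS (eS (S y))) = Defs.shift (fT (gS (eS y))).
  move=> Dy; have [Ll _ _ ->] := YP y Dy.
  by have [_ -> _] := XL _ Ll.
have XtT x : Xt (T x) <-> Xt x.
  have [Dx|nDx] := pselect (DT x); last first.
    by split => -[] //; rewrite XDT.
  have [Ll _ _ _] := XP x Dx; have [KS _ _] := YL _ Ll.
  rewrite /Xt /= XDT XT // YM //.
have YtT y : Yt (S y) <-> Yt y.
  have [Dy|nDy] := pselect (DS y); last first.
    by split => -[] //; rewrite YDT.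
  have [Ll _ _ _] := YP y Dy; have [KS _ _] := XL _ Ll.
  rewrite /Yt /= YDT YT // XM //.
have XY x : Xt x -> Yt (fS (gT (eT x)) 0) /\ fT (gS (eS (fS (gT (eT x)) 0))) 0 = x.
  move=> [Dx nP]; have [Ll nM fl _] := XP x Dx.
  have [KS _ _] := YL _ Ll.
  rewrite YeU // YgF // fl.
  split; last by case: (Xe x).
  rewrite /Yt /=; split; last by rewrite YeU // YgF // fl.
  by change (~ P2 (eS (fS (gT (eT x)) 0))); rewrite YeU.
have YX y : Yt y -> Xt (fT (gS (eS y)) 0) /\ fS (gT (eT (fT (gS (eS y)) 0))) 0 = y.
  move=> [Dy nM]; have [Ll nP fl _] := YP y Dy.
  have [KT _ _] := XL _ Ll.
  rewrite XeU // XgF // fl.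
  split; last by case: (Ye y).
  rewrite /Xt /=; split; last by rewrite XeU // XgF // fl.
  by change (~ M2 (eT (fT (gS (eS y)) 0))); rewrite XeU.
have pcY : continuous (fun w : pseq Y => w 0) :=
  fun x => @proj_continuous int (fun=> Y) 0 x.
have pcX : continuous (fun w : pseq X => w 0) :=
  fun x => @proj_continuous int (fun=> X) 0 x.
exists Xt, Yt, ((fun w : pseq Y => w 0) \o (fS \o (gT \o eT))),
  ((fun w : pseq X => w 0) \o (fT \o (gS \o eS))).
split.
- by split; apply/seteqP; split => x; rewrite /preimage /= ?XtT ?YtT.
- split => // mu emu.
  have [nu [enu key]] := Xnu k0 mu ek0 emu.
  have [_ e1] := key _ YNm.
  by rewrite XtE; apply: meas_part => //; [exact: XD1 | rewrite -/NX -e1; exact: YN0].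
- split => // mu emu.
  have [nu [enu key]] := Ynu k0 mu ek0 emu.
  have [_ e1] := key _ XNm.
  by rewrite YtE; apply: meas_part => //; [exact: YD1 | rewrite -/NY -e1; exact: XN0].
- split.
  + apply: (within_comp (B := setT)); last exact: continuous_subspaceT.
      apply: (within_comp (B := Lam)) => //.
        by apply: continuous_subspaceW Xgc => x [].
      by move=> x [Dx _]; case: (XP x Dx).
    by [].
  + apply: (within_comp (B := setT)); last exact: continuous_subspaceT.
      apply: (within_comp (B := Lam)) => //.
        by apply: continuous_subspaceW Ygc => x [].
      by move=> x [Dy _]; case: (YP x Dy).
    by [].
  + exact: XY.
  + exact: YX.
- move=> x [Dx nP] /=; rewrite XT //.
  have [Ll _ _ _] := XP x Dx; have [KS _ _] := YL _ Ll.
  by rewrite /Defs.shift KS.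
Qed.
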